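(* Let $1<p<\infty$, $n\ge1$, and let $f\in C([0,\infty))$, $g\in C^{0,1}([0,\infty))$ be strictly increasing with $f(0)=g(0)=0$. Let $F(s)=\int_0^s f(t)\,dt$ and $\Gamma(s)=\int_0^{2s}g(t)\,dt+\frac{p-1}{p}c\,s^p$ with $c=\big(\frac{p}{p-1}\big)^p n$, and assume $$\int_1^\infty\frac{ds}{\Gamma^{-1}(F(s))}<\infty.$$ Then for every sufficiently large $\bar v_0>0$ there exist $R\in(0,\infty)$ and an increasing function $\bar v$ on $[0,R)$ which is a strict supersolution of $$\big((v')^{p-1}\big)'+\frac{n-1}{r}(v')^{p-1}\le f(v)-g(v'),\qquad v(0)=\bar v_0,\quad v'(0)=0,$$ ceases to exist at $R$, and satisfies $\bar v(r)\to\infty$ as $r\to R$. *)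

(* Defs.v *)
From Stdlib Require Import Reals ClassicalEpsilon.
From Coquelicot Require Import Coquelicot.
Open Scope R_scope.

(* x^a for x >= 0 (with 0^a = 0); Stdlib's Rpower 0 a = 1, hence the guard. *)
Definition rpow (x a : R) : R := if Rlt_dec 0 x then Rpower x a else 0.

Definition Fprim (f : R -> R) (s : R) : R := RInt f 0 s.

Definition cconst (p : R) (n : nat) : R := rpow (p / (p - 1)) p * INR n.

Definition Gamma (p : R) (n : nat) (g : R -> R) (s : R) : R :=
  RInt g 0 (2 * s) + (p - 1) / p * cconst p n * rpow s p.

Definition inv_on_nonneg (G : R -> R) (y : R) : R :=
  epsilon (inhabits 0) (fun x => 0 <= x /\ G x = y).

(* Main.v *)
Require Import Defs.
From Stdlib Require Import Reals ClassicalEpsilon.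
From Coquelicot Require Import Coquelicot.
From Stdlib Require Import Classical Lra FunctionalExtensionality PropExtensionality.
Open Scope R_scope.

Section Inv.
Variable G : R -> R.
Hypothesis Ginc : forall x y, 0 <= x -> x < y -> G x < G y.
Hypothesis Gcont : forall x, 0 < x -> continuity_pt G x.
Hypothesis G0r : forall eps, 0 < eps -> exists x, 0 < x /\ G x < G 0 + eps.

Lemma Gle x y : 0 <= x -> x <= y -> G x <= G y.
Proof. intros hx hxy. destruct (Req_dec x y) as [->|]; [lra|]. left; apply Ginc; lra. Qed.

Lemma Gle_inv x y : 0 <= x -> 0 <= y -> G x <= G y -> x <= y.
Proof. intros hx hy h. destruct (Rle_lt_dec x y); auto. assert (G y < G x) by (apply Ginc; lra). lra. Qed.

Lemma Glt_inv x y : 0 <= x -> 0 <= y -> G x < G y -> x < y.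
Proof. intros hx hy h. destruct (Rlt_le_dec x y); auto. assert (G y <= G x) by (apply Gle; lra). lra. Qed.

Lemma inv_spec y : (exists x, 0 <= x /\ G x = y) ->
  0 <= inv_on_nonneg G y /\ G (inv_on_nonneg G y) = y.
Proof. intros h. unfold inv_on_nonneg. apply (epsilon_spec (inhabits 0) (fun x => 0 <= x /\ G x = y)). exact h. Qed.

Lemma inv_eq x : 0 <= x -> inv_on_nonneg G (G x) = x.
Proof.
  intros hx. destruct (inv_spec (G x)) as [h1 h2]. { exists x; auto. }
  set (u := inv_on_nonneg G (G x)) in *.
  apply Rle_antisym; apply Gle_inv; lra.
Qed.

Lemma ivt_ex_pos a b y : 0 < a -> a <= b -> G a <= y <= G b -> exists x, a <= x <= b /\ G x = y.
Proof.
  intros ha hab [h1 h2].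
  destruct (Req_dec (G a) y) as [e|ne]. { exists a; split; [lra|auto]. }
  destruct (Req_dec (G b) y) as [e|ne2]. { exists b; split; [lra|auto]. }
  assert (a < b). { destruct (Req_dec a b) as [->|]; [lra|lra]. }
  destruct (Ranalysis5.IVT_interv (fun x => G x - y) a b) as [z [hz hz']].
  - intros c hc. apply continuity_pt_minus; [apply Gcont; lra| apply continuity_pt_const; intros ??; auto].
  - auto.
  - lra.
  - lra.
  - exists z; split; auto; lra.
Qed.

Lemma ivt_ex a b y : 0 <= a -> a <= b -> G a <= y <= G b -> exists x, a <= x <= b /\ G x = y.
Proof.
  intros ha hab hy. destruct (Req_dec a 0) as [->|ha']; [|apply ivt_ex_pos; auto; lra].
  destruct (Req_dec (G 0) y) as [e|ne]. { exists 0; split; [lra|auto]. }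
  destruct (Req_dec b 0) as [->|hb0]; [lra|].
  destruct (G0r (y - G 0)) as [a' [ha1 ha2]]; [lra|].
  set (a'' := Rmin a' b).
  assert (a'' <= a') by apply Rmin_l. assert (a'' <= b) by apply Rmin_r.
  assert (0 < a'') by (apply Rmin_glb_lt; lra).
  assert (G a'' <= G a') by (apply Gle; lra).
  destruct (ivt_ex_pos a'' b y) as [x [hx ex]]; auto; try lra.
  exists x; split; auto; lra.
Qed.

Lemma inv_loc a b y : 0 <= a -> a <= b -> G a <= y <= G b ->
  a <= inv_on_nonneg G y <= b /\ G (inv_on_nonneg G y) = y.
Proof.
  intros ha hab hy. destruct (ivt_ex a b y ha hab hy) as [x [hx e]].
  subst y. rewrite inv_eq by lra. split; auto.
Qed.

Lemma inv_loc_strict a b y : 0 <= a -> a < b -> G a < y < G b ->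
  a < inv_on_nonneg G y < b /\ G (inv_on_nonneg G y) = y.
Proof.
  intros ha hab hy.
  destruct (inv_loc a b y ha (Rlt_le _ _ hab)) as [h1 h2]; [lra|].
  split; auto. split.
  - destruct h1 as [h1 _]. destruct (Req_dec a (inv_on_nonneg G y)) as [e|]; [|lra]. rewrite <- e in h2; lra.
  - destruct h1 as [_ h1]. destruct (Req_dec b (inv_on_nonneg G y)) as [e|]; [|lra]. rewrite <- e in h2; lra.
Qed.

Lemma inv_mono y1 y2 : (exists x, 0 <= x /\ G x = y1) -> (exists x, 0 <= x /\ G x = y2) -> y1 < y2 ->
  inv_on_nonneg G y1 < inv_on_nonneg G y2.
Proof.
  intros e1 e2 h. destruct (inv_spec _ e1) as [a1 b1]. destruct (inv_spec _ e2) as [a2 b2].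
  apply Glt_inv; lra.
Qed.

Lemma inv_near x0 : 0 < x0 -> forall eps, 0 < eps -> exists del, 0 < del /\
  forall y, Rabs (y - G x0) < del -> Rabs (inv_on_nonneg G y - x0) < eps /\ G (inv_on_nonneg G y) = y.
Proof.
  intros hx0 eps heps. set (e := Rmin (eps / 2) (x0 / 2)).
  assert (he : 0 < e) by (unfold e; apply Rmin_glb_lt; lra).
  assert (he1 : e < eps) by (unfold e; pose proof (Rmin_l (eps/2) (x0/2)); lra).
  assert (he2 : e <= x0/2) by (unfold e; apply Rmin_r).
  assert (l1 : G (x0 - e) < G x0) by (apply Ginc; lra).
  assert (l2 : G x0 < G (x0 + e)) by (apply Ginc; lra).
  set (d := Rmin (G x0 - G (x0 - e)) (G (x0 + e) - G x0)).
  assert (hd : 0 < d) by (unfold d; apply Rmin_glb_lt; lra).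
  exists d. split; auto. intros y H.
  assert (d <= G x0 - G (x0 - e)) by apply Rmin_l. assert (d <= G (x0 + e) - G x0) by apply Rmin_r.
  apply Rabs_def2 in H.
  destruct (inv_loc_strict (x0 - e) (x0 + e) y) as [h1 h2]; [lra|lra|lra|].
  split; auto. apply Rabs_def1; lra.
Qed.

Lemma inv_cont x0 : 0 < x0 -> continuity_pt (inv_on_nonneg G) (G x0).
Proof.
  intros hx0 eps heps. destruct (inv_near x0 hx0 eps heps) as [del [hdel H]].
  exists del. split; auto. intros y [_ hy]. simpl in *. unfold R_dist in *.
  rewrite inv_eq by lra. apply H; auto.
Qed.

Lemma inv_derive x0 d : 0 < x0 -> 0 < d -> is_derive G x0 d ->
  is_derive (inv_on_nonneg G) (G x0) (/ d).
Proof.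
  intros hx0 hd hG. apply is_derive_Reals. apply is_derive_Reals in hG.
  intros eps heps.
  set (e' := Rmin (d/2) (eps * (d * d) / 2)).
  assert (hdd : 0 < d * d) by (apply Rmult_lt_0_compat; lra).
  assert (he' : 0 < e') by (unfold e'; apply Rmin_glb_lt; [lra| apply Rmult_lt_0_compat; [|lra]; apply Rmult_lt_0_compat; lra]).
  assert (he1 : e' <= d/2) by apply Rmin_l. assert (he2 : e' <= eps * (d * d) / 2) by apply Rmin_r.
  destruct (hG e' he') as [d1 hd1].
  destruct (inv_near x0 hx0 d1 (cond_pos d1)) as [d2 [hd2 H]].
  exists (mkposreal d2 hd2). intros h hh0 hh. simpl in hh.
  destruct (H (G x0 + h)) as [hx ex]. { replace (G x0 + h - G x0) with h by ring. auto. }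
  rewrite inv_eq by lra.
  set (x := inv_on_nonneg G (G x0 + h)) in *.
  set (k := x - x0).
  assert (hk : k <> 0). { intro e0. assert (x = x0) by (unfold k in e0; lra). rewrite H0 in ex. apply hh0; lra. }
  specialize (hd1 k hk hx). replace (x0 + k) with x in hd1 by (unfold k; ring).
  rewrite ex in hd1. replace (G x0 + h - G x0) with h in hd1 by ring.
  set (q := h / k) in *.
  apply Rabs_def2 in hd1. destruct hd1 as [q1 q2].
  assert (hq : 0 < q) by lra.
  replace (k / h - / d) with ((d - q) / (q * d)).
  2:{ unfold q. field. repeat split; auto; lra. }
  unfold Rdiv at 1. rewrite Rabs_mult, Rabs_inv.
  rewrite (Rabs_right (q * d)) by (left; apply Rmult_lt_0_compat; lra).
  apply (Rmult_lt_reg_r (q * d)); [apply Rmult_lt_0_compat; lra|].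
  unfold Rdiv. rewrite Rmult_assoc, Rinv_l, Rmult_1_r by (apply Rgt_not_eq, Rmult_lt_0_compat; lra).
  apply Rle_lt_trans with e'. { apply Rabs_le; lra. }
  apply Rle_lt_trans with (eps * (d * d) / 2); auto.
  assert (eps * (d*d) / 2 < eps * (q * d)); [|lra].
  replace (eps * (d * d) / 2) with (eps * ((d/2) * d)) by field.
  apply Rmult_lt_compat_l; auto. apply Rmult_lt_compat_r; lra.
Qed.
End Inv.


Lemma rpow_pos x a : 0 < x -> rpow x a = Rpower x a.
Proof. intros h. unfold rpow. destruct (Rlt_dec 0 x); [auto|lra]. Qed.
Lemma rpow_npos x a : x <= 0 -> rpow x a = 0.
Proof. intros h. unfold rpow. destruct (Rlt_dec 0 x); [lra|auto]. Qed.
Lemma rpow_gt0 x a : 0 < x -> 0 < rpow x a.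
Proof. intros h. rewrite rpow_pos by auto. apply exp_pos. Qed.
Lemma rpow_ge0 x a : 0 <= rpow x a.
Proof. unfold rpow. destruct (Rlt_dec 0 x); [left; apply exp_pos|lra]. Qed.
Lemma rpow_mult x a b : rpow (rpow x a) b = rpow x (a * b).
Proof.
  destruct (Rlt_dec 0 x).
  - rewrite (rpow_pos x a) by auto. rewrite rpow_pos by (apply exp_pos). rewrite Rpower_mult.
    rewrite rpow_pos; auto.
  - rewrite !(rpow_npos x) by lra. apply rpow_npos; lra.
Qed.
Lemma rpow_plus x a b : 0 < x -> rpow x (a + b) = rpow x a * rpow x b.
Proof. intros h. rewrite !rpow_pos by auto. apply Rpower_plus. Qed.
Lemma rpow_1 x : 0 <= x -> rpow x 1 = x.
Proof. intros h. destruct (Rlt_dec 0 x). rewrite rpow_pos by auto. apply Rpower_1; auto. rewrite rpow_npos; lra. Qed.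
Lemma rpow_mul_base x y a : 0 <= x -> 0 <= y -> rpow (x * y) a = rpow x a * rpow y a.
Proof.
  intros hx hy. destruct (Rlt_dec 0 x); destruct (Rlt_dec 0 y).
  - rewrite !rpow_pos; auto. symmetry; apply Rpower_mult_distr; auto. apply Rmult_lt_0_compat; auto.
  - assert (y = 0) by lra. subst. rewrite Rmult_0_r, !(rpow_npos 0); lra.
  - assert (x = 0) by lra. subst. rewrite Rmult_0_l, !(rpow_npos 0); lra.
  - assert (x = 0) by lra. subst. rewrite Rmult_0_l, !(rpow_npos 0); lra.
Qed.
Lemma rpow_lt x y a : 0 < a -> 0 <= x -> x < y -> rpow x a < rpow y a.
Proof.
  intros ha hx hxy. destruct (Rlt_dec 0 x).
  - rewrite !rpow_pos by lra. apply Rlt_Rpower_l; lra.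
  - rewrite rpow_npos by lra. apply rpow_gt0; lra.
Qed.
Lemma rpow_le x y a : 0 < a -> 0 <= x -> x <= y -> rpow x a <= rpow y a.
Proof. intros ha hx hxy. destruct (Req_dec x y) as [->|]; [lra|]. left; apply rpow_lt; lra. Qed.
Lemma rpow_ge_base t e : 1 <= t -> 1 <= e -> t <= rpow t e.
Proof.
  intros ht he. rewrite rpow_pos by lra. rewrite <- (Rpower_1 t) at 1 by lra. apply Rle_Rpower; lra.
Qed.
Lemma rpow_le_base x e : 0 <= x <= 1 -> 1 <= e -> rpow x e <= x.
Proof.
  intros hx he. destruct (Rlt_dec 0 x).
  - rewrite rpow_pos by lra. unfold Rpower. rewrite <- (exp_ln x) at 2 by lra.
    assert (ln x <= 0). { destruct (Req_dec x 1) as [->|]. rewrite ln_1; lra. left. rewrite <- ln_1. apply ln_increasing; lra. }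
    destruct (Req_dec (e * ln x) (ln x)) as [E|]. rewrite E; lra. left; apply exp_increasing. nra.
  - rewrite rpow_npos; lra.
Qed.

Lemma rpow_derive x a : 0 < x -> is_derive (fun t => rpow t a) x (a * rpow x (a - 1)).
Proof.
  intros hx. rewrite rpow_pos by auto.
  apply (is_derive_ext_loc (fun t => Rpower t a)).
  - exists (mkposreal x hx). intros t ht. unfold ball in ht; simpl in ht; unfold AbsRing_ball, abs, minus, plus, opp in ht; simpl in ht.
    apply Rabs_def2 in ht. rewrite rpow_pos; auto; lra.
  - apply is_derive_Reals. apply derivable_pt_lim_power; auto.
Qed.

Lemma rpow_small e : 0 < e -> forall eps, 0 < eps -> exists d, 0 < d /\ forall x, x < d -> rpow x e < eps.
Proof.
  intros he eps heps. exists (Rpower eps (/ e)). split; [apply exp_pos|]. intros x hx.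
  destruct (Rlt_dec 0 x).
  - rewrite rpow_pos by auto. replace eps with (Rpower (Rpower eps (/ e)) e).
    + apply Rlt_Rpower_l; auto.
    + rewrite Rpower_mult. replace (/ e * e) with 1 by (field; lra). apply Rpower_1; auto.
  - rewrite rpow_npos; lra.
Qed.

Lemma rpow_cont e x : 0 < e -> continuous (fun t => rpow t e) x.
Proof.
  intros he. destruct (Rlt_dec 0 x).
  - exact (@ex_derive_continuous R_AbsRing R_NormedModule (fun t => rpow t e) x (ex_intro _ _ (rpow_derive x e r))).
  - destruct (Rlt_dec x 0).
    + apply (continuous_ext_loc _ (fun _ => 0)).
      * exists (mkposreal (-x) ltac:(lra)). intros t ht. unfold ball in ht; simpl in ht; unfold AbsRing_ball, abs, minus, plus, opp in ht; simpl in ht.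
        apply Rabs_def2 in ht. rewrite rpow_npos; auto; lra.
      * apply continuous_const.
    + assert (x = 0) by lra. subst. apply continuity_pt_filterlim. intros eps heps.
      destruct (rpow_small e he eps heps) as [d [hd H]]. exists d; split; auto.
      intros y [_ hy]. simpl in hy. unfold R_dist in *. rewrite (rpow_npos 0) by lra.
      simpl. unfold R_dist. replace (rpow y e - 0) with (rpow y e) by ring. rewrite Rabs_right by (apply Rle_ge, rpow_ge0). unfold R_dist in hy. rewrite Rminus_0_r in hy. apply H. apply Rabs_def2 in hy. lra.
Qed.


Lemma deriv_cont_pt Φ x d : is_derive Φ x d -> continuity_pt Φ x.
Proof.
  intros h. apply continuity_pt_filterlim.
  exact (@ex_derive_continuous R_AbsRing R_NormedModule Φ x (ex_intro _ _ h)).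
Qed.

Lemma mvt_bounds Φ D x y lo hi : x <= y -> (forall c, x <= c <= y -> is_derive Φ c (D c)) ->
  (forall c, x <= c <= y -> lo <= D c <= hi) -> lo * (y - x) <= Φ y - Φ x <= hi * (y - x).
Proof.
  intros hxy hd hb. destruct (MVT_gen Φ x y D) as [c [hc e]].
  - intros c hc. apply hd. rewrite Rmin_left, Rmax_right in hc by lra. lra.
  - intros c hc. rewrite Rmin_left, Rmax_right in hc by lra. eapply deriv_cont_pt, hd; lra.
  - rewrite Rmin_left, Rmax_right in hc by lra. rewrite e. specialize (hb c hc). split; nra.
Qed.

Lemma mvt_pos Φ D x y : x < y -> (forall c, x <= c <= y -> is_derive Φ c (D c)) ->
  (forall c, x <= c <= y -> 0 < D c) -> Φ x < Φ y.
Proof.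
  intros hxy hd hb. destruct (MVT_gen Φ x y D) as [c [hc e]].
  - intros c hc. apply hd. rewrite Rmin_left, Rmax_right in hc by lra. lra.
  - intros c hc. rewrite Rmin_left, Rmax_right in hc by lra. eapply deriv_cont_pt, hd; lra.
  - rewrite Rmin_left, Rmax_right in hc by lra. specialize (hb c hc). nra.
Qed.

Lemma mvt_lower Φ D x y lo : x <= y -> (forall c, x <= c <= y -> is_derive Φ c (D c)) ->
  (forall c, x <= c <= y -> lo <= D c) -> lo * (y - x) <= Φ y - Φ x.
Proof.
  intros hxy hd hb. destruct (MVT_gen Φ x y D) as [c [hc e]].
  - intros c hc. apply hd. rewrite Rmin_left, Rmax_right in hc by lra. lra.
  - intros c hc. rewrite Rmin_left, Rmax_right in hc by lra. eapply deriv_cont_pt, hd; lra.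
  - rewrite Rmin_left, Rmax_right in hc by lra. rewrite e. specialize (hb c hc). nra.
Qed.

Lemma mvt_upper Φ D x y hi : x <= y -> (forall c, x <= c <= y -> is_derive Φ c (D c)) ->
  (forall c, x <= c <= y -> D c <= hi) -> Φ y - Φ x <= hi * (y - x).
Proof.
  intros hxy hd hb. destruct (MVT_gen Φ x y D) as [c [hc e]].
  - intros c hc. apply hd. rewrite Rmin_left, Rmax_right in hc by lra. lra.
  - intros c hc. rewrite Rmin_left, Rmax_right in hc by lra. eapply deriv_cont_pt, hd; lra.
  - rewrite Rmin_left, Rmax_right in hc by lra. rewrite e. specialize (hb c hc). nra.
Qed.

Lemma strict_incr Φ D : (forall c, 0 <= c -> is_derive Φ c (D c)) -> (forall c, 0 <= c -> 0 <= D c) ->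
  (forall c, 0 < c -> 0 < D c) -> forall x y, 0 <= x -> x < y -> Φ x < Φ y.
Proof.
  intros hd h0 h1 x y hx hxy. set (m := (x + y) / 2).
  assert (A : 0 * (m - x) <= Φ m - Φ x).
  { apply (mvt_lower Φ D x m 0); [unfold m; lra| intros; apply hd; lra|].
    intros c hc. apply h0; lra. }
  assert (B : Φ m < Φ y).
  { apply (mvt_pos Φ D m y); [unfold m; lra| intros; apply hd; unfold m in *; lra|].
    intros c hc. apply h1; unfold m in *; lra. }
  lra.
Qed.


Lemma inv_ext G1 G2 y : (forall x, 0 <= x -> G1 x = G2 x) -> inv_on_nonneg G1 y = inv_on_nonneg G2 y.
Proof.
  intros h. unfold inv_on_nonneg. f_equal. apply functional_extensionality. intros x.
  apply propositional_extensionality. split; intros [h1 h2]; split; auto; [rewrite <- h | rewrite h]; auto.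
Qed.

Lemma ball_R x e y : ball x e y <-> Rabs (y - x) < e.
Proof. unfold ball; simpl; unfold AbsRing_ball, abs, minus, plus, opp; simpl. tauto. Qed.

Lemma RInt_pt0 (h : R -> R) a : RInt h a a = 0.
Proof. exact (RInt_point a h). Qed.

Ltac rball H := apply ball_R in H; apply Rabs_def2 in H; unfold minus, plus, opp in H; simpl in H.

Section Main.
Variables (p : R) (n : nat) (f g : R -> R) (L : R).
Hypothesis hp : 1 < p.
Hypothesis hn : (1 <= n)%nat.
Hypothesis hfc : forall x, 0 < x -> continuous f x.
Hypothesis hfc0 : filterlim f (at_right 0) (locally (f 0)).
Hypothesis hfinc : forall x y, 0 <= x -> x < y -> f x < f y.
Hypothesis hf0 : f 0 = 0.
Hypothesis hL : forall x y, 0 <= x -> 0 <= y -> Rabs (g x - g y) <= L * Rabs (x - y).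
Hypothesis hginc : forall x y, 0 <= x -> x < y -> g x < g y.
Hypothesis hg0 : g 0 = 0.

Definition ft t := f (Rmax 0 t).
Definition gt t := g (Rmax 0 t).
Definition Ft s := RInt ft 0 s.
Definition kk := (p - 1) / p * cconst p n.
Definition Gt s := RInt gt 0 (2 * s) + kk * rpow s p.

Lemma f_le x y : 0 <= x -> x <= y -> f x <= f y.
Proof. intros. destruct (Req_dec x y) as [->|]; [lra|left; apply hfinc; lra]. Qed.
Lemma g_le x y : 0 <= x -> x <= y -> g x <= g y.
Proof. intros. destruct (Req_dec x y) as [->|]; [lra|left; apply hginc; lra]. Qed.
Lemma f_pos x : 0 < x -> 0 < f x.
Proof. intros. rewrite <- hf0. apply hfinc; lra. Qed.
Lemma g_pos x : 0 < x -> 0 < g x.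
Proof. intros. rewrite <- hg0. apply hginc; lra. Qed.
Lemma f_nn x : 0 <= x -> 0 <= f x.
Proof. intros. rewrite <- hf0. apply f_le; lra. Qed.
Lemma g_nn x : 0 <= x -> 0 <= g x.
Proof. intros. rewrite <- hg0. apply g_le; lra. Qed.

Lemma ft_le x y : x <= y -> ft x <= ft y.
Proof. intros. unfold ft. apply f_le. apply Rmax_l. apply Rle_max_compat_l; auto. Qed.
Lemma gt_le x y : x <= y -> gt x <= gt y.
Proof. intros. unfold gt. apply g_le. apply Rmax_l. apply Rle_max_compat_l; auto. Qed.
Lemma ft_nn x : 0 <= ft x.
Proof. unfold ft. apply f_nn, Rmax_l. Qed.
Lemma gt_nn x : 0 <= gt x.
Proof. unfold gt. apply g_nn, Rmax_l. Qed.
Lemma ft_eq x : 0 <= x -> ft x = f x.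
Proof. intros. unfold ft. rewrite Rmax_right; auto. Qed.
Lemma gt_eq x : 0 <= x -> gt x = g x.
Proof. intros. unfold gt. rewrite Rmax_right; auto. Qed.

Lemma L_nn : 0 <= L.
Proof. specialize (hL 1 0). rewrite hg0 in hL. pose proof (g_pos 1). 
  rewrite Rminus_0_r, Rabs_right in hL by lra. rewrite Rminus_0_r, Rabs_right in hL by lra. nra. Qed.

Lemma gt_cont x : continuous gt x.
Proof.
  apply continuity_pt_filterlim. intros eps heps. exists (eps / (L + 1)). split.
  { apply Rdiv_lt_0_compat; [lra|pose proof L_nn; lra]. }
  intros y [_ hy]. simpl in *. unfold R_dist in *. unfold gt.
  pose proof L_nn.
  eapply Rle_lt_trans. apply hL; apply Rmax_l.
  apply Rle_lt_trans with (L * Rabs (y - x)).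
  { apply Rmult_le_compat_l; auto. unfold Rmax; destruct (Rle_dec 0 y); destruct (Rle_dec 0 x); split_Rabs; lra. }
  apply Rle_lt_trans with ((L + 1) * Rabs (y - x)). { pose proof (Rabs_pos (y - x)); nra. }
  apply (Rmult_lt_reg_r (/ (L + 1))). apply Rinv_0_lt_compat; lra.
  replace ((L + 1) * Rabs (y - x) * / (L + 1)) with (Rabs (y - x)) by (field; lra).
  apply Rlt_le_trans with (eps / (L + 1)); auto. unfold Rdiv. lra.
Qed.

Lemma ft_cont x : continuous ft x.
Proof.
  destruct (Rlt_dec 0 x).
  - apply (continuous_ext_loc _ f).
    + exists (mkposreal x r). intros y hy. rball hy.
      rewrite ft_eq; auto; lra.
    + apply hfc; auto.
  - destruct (Rlt_dec x 0).
    + apply (continuous_ext_loc _ (fun _ => f 0)).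
      * exists (mkposreal (-x) ltac:(lra)). intros y hy. rball hy.
        unfold ft. rewrite Rmax_left; auto; lra.
      * apply continuous_const.
    + assert (x = 0) by lra. subst x. intros P [eps heps].
      destruct (hfc0 (ball (f 0) eps)) as [d hd]. { exists eps; auto. }
      exists d. intros y hy. apply heps. unfold ft. rewrite (Rmax_left 0 0) by lra.
      destruct (Rlt_dec 0 y) as [hy0|hy0].
      * rewrite (Rmax_right 0 y) by lra. apply hd; auto.
      * apply Rnot_lt_le in hy0. rewrite (Rmax_left 0 y) by exact hy0. apply ball_center.
Qed.

Lemma ex_RInt_ft a b : ex_RInt ft a b.
Proof. apply (@ex_RInt_continuous R_CompleteNormedModule). intros; apply ft_cont. Qed.
Lemma ex_RInt_gt a b : ex_RInt gt a b.
Proof. apply (@ex_RInt_continuous R_CompleteNormedModule). intros; apply gt_cont. Qed.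

Lemma Ft_deriv x : is_derive Ft x (ft x).
Proof.
  apply (is_derive_RInt ft Ft 0). { apply filter_forall. intros; apply (@RInt_correct R_CompleteNormedModule), ex_RInt_ft. } apply ft_cont.
Qed.

Lemma Ig_deriv x : is_derive (fun s => RInt gt 0 s) x (gt x).
Proof.
  apply (is_derive_RInt gt (fun s => RInt gt 0 s) 0). { apply filter_forall. intros; apply (@RInt_correct R_CompleteNormedModule), ex_RInt_gt. } apply gt_cont.
Qed.

Lemma Ig2_deriv x : is_derive (fun s => RInt gt 0 (2 * s)) x (2 * gt (2 * x)).
Proof.
  assert (D2 : is_derive (fun s : R => 2 * s) x 2). { auto_derive; auto; ring. }
  exact (is_derive_comp (fun s => RInt gt 0 s) (fun s => 2 * s) x (gt (2*x)) 2 (Ig_deriv _) D2).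
Qed.

Definition mm := p / (p - 1).
Lemma mm_gt1 : 1 < mm.
Proof. unfold mm. apply (Rmult_lt_reg_r (p - 1)); [lra|]. unfold Rdiv. rewrite Rmult_assoc, Rinv_l by lra. lra. Qed.
Lemma INRn_ge1 : 1 <= INR n.
Proof. apply (le_INR 1 n) in hn. simpl in hn. lra. Qed.
Lemma cconst_gt : INR n < cconst p n.
Proof.
  unfold cconst. fold mm. pose proof mm_gt1. pose proof INRn_ge1.
  assert (mm <= rpow mm p) by (apply rpow_ge_base; lra). nra.
Qed.
Lemma kk_pos : 0 < kk.
Proof.
  unfold kk. pose proof cconst_gt. pose proof INRn_ge1. apply Rmult_lt_0_compat; [|lra].
  apply Rdiv_lt_0_compat; lra.
Qed.
Lemma kk_mm : mm * kk = cconst p n.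
Proof. unfold mm, kk. field. lra. Qed.

Lemma Gt_deriv x : 0 < x -> is_derive Gt x (2 * gt (2 * x) + kk * (p * rpow x (p - 1))).
Proof.
  intros hx. unfold Gt. apply (is_derive_plus (fun s => RInt gt 0 (2 * s)) (fun s => kk * rpow s p)).
  - apply Ig2_deriv.
  - apply is_derive_scal. apply rpow_derive; auto.
Qed.

Lemma Gt0 : Gt 0 = 0.
Proof. unfold Gt. rewrite Rmult_0_r, RInt_pt0, rpow_npos by lra. simpl. ring. Qed.
Lemma Ft0 : Ft 0 = 0.
Proof. unfold Ft. rewrite RInt_pt0. reflexivity. Qed.

Lemma Gt_cont x : continuous Gt x.
Proof.
  unfold Gt. apply (continuous_plus (fun s => RInt gt 0 (2 * s)) (fun s => kk * rpow s p)).
  - exact (@ex_derive_continuous R_AbsRing R_NormedModule _ x (ex_intro _ _ (Ig2_deriv x))).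
  - apply (continuous_scal_r kk (fun s => rpow s p)). apply rpow_cont; lra.
Qed.

Lemma Ig_nn x y : x <= y -> 0 <= RInt gt 0 y - RInt gt 0 x.
Proof.
  intros h. pose proof (mvt_lower (fun s => RInt gt 0 s) gt x y 0 h (fun c _ => Ig_deriv c) (fun c _ => gt_nn c)).
  lra.
Qed.

Lemma Gt_inc x y : 0 <= x -> x < y -> Gt x < Gt y.
Proof.
  intros hx hxy. unfold Gt. pose proof (Ig_nn (2 * x) (2 * y) ltac:(lra)).
  pose proof (rpow_lt x y p ltac:(lra) hx hxy). pose proof kk_pos. nra.
Qed.

Lemma Gt_lb x : 0 <= x -> kk * rpow x p <= Gt x.
Proof. intros hx. unfold Gt. pose proof (Ig_nn 0 (2 * x) ltac:(lra)). rewrite RInt_pt0 in H. simpl in H. lra. Qed.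

Lemma Gt_wg w : 0 <= w -> w * g w <= Gt w.
Proof.
  intros hw. pose proof (Gt_lb w hw). unfold Gt in *.
  pose proof (Ig_nn 0 w hw). rewrite RInt_pt0 in H0. simpl in H0.
  pose proof (mvt_lower (fun s => RInt gt 0 s) gt w (2 * w) (g w) ltac:(lra) (fun c _ => Ig_deriv c)).
  assert (forall c, w <= c <= 2 * w -> g w <= gt c). { intros c hc. rewrite <- (gt_eq w) by lra. apply gt_le; lra. }
  specialize (H1 H2). pose proof kk_pos. pose proof (rpow_ge0 w p). nra.
Qed.

Lemma Gt_super t x : 1 <= t -> 0 <= x -> t * Gt x <= Gt (t * x).
Proof.
  intros ht hx. unfold Gt.
  set (J := fun s => RInt gt 0 (2 * (t * s)) - t * RInt gt 0 (2 * s)).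
  assert (DJ : forall c, is_derive J c (t * (2 * gt (2 * (t * c))) - t * (2 * gt (2 * c)))).
  { intros c. unfold J. apply (is_derive_minus (fun s => RInt gt 0 (2 * (t * s))) (fun s => t * RInt gt 0 (2 * s))).
    - assert (Dt : is_derive (fun s : R => t * s) c t). { auto_derive; auto; ring. }
      pose proof (is_derive_comp (fun s => RInt gt 0 (2 * s)) (fun s => t * s) c _ t (Ig2_deriv (t * c)) Dt).
      exact H.
    - apply is_derive_scal. apply Ig2_deriv. }
  pose proof (mvt_lower J _ 0 x 0 hx (fun c _ => DJ c)).
  assert (0 * (x - 0) <= J x - J 0).
  { apply H. intros c hc. assert (gt (2 * c) <= gt (2 * (t * c))) by (apply gt_le; nra).
    pose proof (gt_nn (2 * c)). nra. }
  unfold J in H0. rewrite !Rmult_0_r, !RInt_pt0 in H0. simpl in H0.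
  rewrite rpow_mul_base by lra. pose proof (rpow_ge_base t p ht ltac:(lra)).
  pose proof (rpow_ge0 x p). pose proof kk_pos. assert (0 <= kk * rpow x p * (rpow t p - t)) by (apply Rmult_le_pos; [apply Rmult_le_pos|]; lra). nra.
Qed.

Lemma Gt_unb y : exists X, 0 <= X /\ y <= Gt X.
Proof.
  pose proof kk_pos. exists (Rmax 1 (y / kk)). split. { pose proof (Rmax_l 1 (y / kk)); lra. }
  pose proof (Rmax_l 1 (y / kk)). pose proof (Rmax_r 1 (y / kk)).
  pose proof (Gt_lb (Rmax 1 (y / kk)) ltac:(lra)).
  pose proof (rpow_ge_base (Rmax 1 (y / kk)) p ltac:(lra) ltac:(lra)).
  assert (y = kk * (y / kk)) by (field; lra). nra.
Qed.

Lemma Ft_inc x y : 0 <= x -> x < y -> Ft x < Ft y.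
Proof.
  apply (strict_incr Ft ft). intros; apply Ft_deriv. intros; apply ft_nn.
  intros c hc. rewrite ft_eq by lra. apply f_pos; auto.
Qed.

Lemma Ft_bounds x y : 0 <= x -> x <= y -> (y - x) * f x <= Ft y - Ft x <= (y - x) * f y.
Proof.
  intros hx hxy. split.
  - rewrite Rmult_comm. apply (mvt_lower Ft ft); auto. intros; apply Ft_deriv.
    intros c hc. rewrite <- ft_eq by lra. apply ft_le; lra.
  - rewrite Rmult_comm. apply (mvt_upper Ft ft); auto. intros; apply Ft_deriv.
    intros c hc. rewrite <- (ft_eq y) by lra. apply ft_le; lra.
Qed.

Lemma Ft_unb y : exists X, 0 <= X /\ y <= Ft X.
Proof.
  pose proof (f_pos 1 ltac:(lra)). set (X := Rmax 2 (1 + y / f 1)). exists X.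
  pose proof (Rmax_l 2 (1 + y / f 1)). pose proof (Rmax_r 2 (1 + y / f 1)). fold X in H0, H1.
  split; [lra|].
  pose proof (Ft_bounds 0 1 ltac:(lra) ltac:(lra)). pose proof (Ft_bounds 1 X ltac:(lra) ltac:(lra)).
  rewrite Ft0 in H2. rewrite hf0 in H2.
  assert (y = (y / f 1) * f 1) by (field; lra). nra.
Qed.

Lemma Fprim_eq s : 0 <= s -> Fprim f s = Ft s.
Proof.
  intros hs. unfold Fprim, Ft. apply RInt_ext. intros x hx. rewrite Rmin_left, Rmax_right in hx by lra.
  rewrite ft_eq; lra.
Qed.

Lemma Gamma_eq s : 0 <= s -> Gamma p n g s = Gt s.
Proof.
  intros hs. unfold Gamma, Gt, kk. f_equal. apply RInt_ext. intros x hx. rewrite Rmin_left, Rmax_right in hx by lra.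
  rewrite gt_eq; lra.
Qed.

Lemma cont0_r G : continuous G 0 -> forall eps, 0 < eps -> exists x, 0 < x /\ G x < G 0 + eps.
Proof.
  intros hc eps heps. apply continuity_pt_filterlim in hc. destruct (hc eps heps) as [d [hd H]].
  exists (d / 2). split; [lra|]. specialize (H (d / 2)). simpl in H. unfold R_dist in H.
  assert (Rabs (G (d/2) - G 0) < eps). { apply H. split. unfold D_x, no_cond; split; auto; lra. rewrite Rminus_0_r, Rabs_right; lra. }
  apply Rabs_def2 in H0. lra.
Qed.

Lemma Ft_cpt x : continuity_pt Ft x.
Proof. eapply deriv_cont_pt, Ft_deriv. Qed.
Lemma Gt_cpt x : continuity_pt Gt x.
Proof. apply continuity_pt_filterlim, Gt_cont. Qed.
Lemma Ft_0r : forall eps, 0 < eps -> exists x, 0 < x /\ Ft x < Ft 0 + eps.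
Proof. apply cont0_r. exact (@ex_derive_continuous R_AbsRing R_NormedModule _ 0 (ex_intro _ _ (Ft_deriv 0))). Qed.
Lemma Gt_0r : forall eps, 0 < eps -> exists x, 0 < x /\ Gt x < Gt 0 + eps.
Proof. apply cont0_r, Gt_cont. Qed.

Definition Finv := inv_on_nonneg Ft.
Definition Hf v := inv_on_nonneg Gt (Ft v).

Lemma Finv_spec y : 0 <= y -> 0 <= Finv y /\ Ft (Finv y) = y.
Proof.
  intros hy. apply inv_spec. destruct (Ft_unb y) as [X [hX hXy]].
  destruct (ivt_ex Ft Ft_inc (fun x _ => Ft_cpt x) Ft_0r 0 X y) as [x [hx ex]]; [lra|lra|rewrite Ft0; lra|].
  exists x; split; [lra|auto].
Qed.

Lemma Ginv_spec y : 0 <= y -> 0 <= inv_on_nonneg Gt y /\ Gt (inv_on_nonneg Gt y) = y.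
Proof.
  intros hy. apply inv_spec. destruct (Gt_unb y) as [X [hX hXy]].
  destruct (ivt_ex Gt Gt_inc (fun x _ => Gt_cpt x) Gt_0r 0 X y) as [x [hx ex]]; [lra|lra|rewrite Gt0; lra|].
  exists x; split; [lra|auto].
Qed.

Lemma Ft_nn v : 0 <= v -> 0 <= Ft v.
Proof. intros. pose proof (Ft_bounds 0 v ltac:(lra) H). rewrite Ft0, hf0 in H0. lra. Qed.
Lemma Ft_pos v : 0 < v -> 0 < Ft v.
Proof. intros. rewrite <- Ft0. apply Ft_inc; lra. Qed.

Lemma Hf_spec v : 0 <= v -> 0 <= Hf v /\ Gt (Hf v) = Ft v.
Proof. intros. apply Ginv_spec, Ft_nn; auto. Qed.

Lemma Hf_pos v : 0 < v -> 0 < Hf v.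
Proof.
  intros hv. destruct (Hf_spec v) as [h1 h2]; [lra|]. destruct h1 as [h1|h1]; auto.
  rewrite <- h1, Gt0 in h2. pose proof (Ft_pos v hv). lra.
Qed.

Lemma Hf_le u v : 0 <= u -> u <= v -> Hf u <= Hf v.
Proof.
  intros hu huv. destruct (Hf_spec u) as [a1 b1]; auto. destruct (Hf_spec v) as [a2 b2]; [lra|].
  apply (Gle_inv Gt Gt_inc); auto. rewrite b1, b2. destruct (Req_dec u v) as [->|]; [lra|].
  left; apply Ft_inc; lra.
Qed.

Lemma Hf_cont v : 0 < v -> continuity_pt Hf v.
Proof.
  intros hv. unfold Hf. change (continuity_pt (comp (inv_on_nonneg Gt) Ft) v). apply continuity_pt_comp. apply Ft_cpt.
  destruct (Hf_spec v) as [_ e]; [lra|]. rewrite <- e.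
  apply (inv_cont Gt Gt_inc (fun x _ => Gt_cpt x) Gt_0r). apply Hf_pos; auto.
Qed.

Section Constr.
Variable a : R.
Hypothesis ha : 1 <= a.

Definition sw s := rpow s mm.
Definition Vf s := Finv (Ft a + Gt (sw s)).
Definition gq s := if Rlt_dec 0 s then g (2 * sw s) / s else 0.
Definition rhod s := mm * (2 * gq s + kk * p * rpow s (p - 1)) / f (Vf s).
Definition rho s := RInt rhod 0 s.
Definition Vd s := rhod s * sw s.

Lemma sw_nn s : 0 <= sw s.
Proof. apply rpow_ge0. Qed.

Lemma V_spec s : 0 <= Vf s /\ Ft (Vf s) = Ft a + Gt (sw s).
Proof.
  apply Finv_spec. pose proof (Ft_nn a ltac:(lra)). pose proof (Gt_lb (sw s) (sw_nn s)).
  pose proof (rpow_ge0 (sw s) p). pose proof kk_pos. nra.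
Qed.

Lemma V_ge_a s : a <= Vf s.
Proof.
  destruct (V_spec s) as [h1 h2]. apply (Gle_inv Ft Ft_inc); [lra|auto|].
  rewrite h2. pose proof (Gt_lb (sw s) (sw_nn s)). pose proof (rpow_ge0 (sw s) p). pose proof kk_pos. nra.
Qed.

Lemma V_pos s : 0 < Vf s.
Proof. pose proof (V_ge_a s). lra. Qed.

Lemma V_npos s : s <= 0 -> Vf s = a.
Proof.
  intros hs. unfold Vf, sw. rewrite rpow_npos by auto. rewrite Gt0, Rplus_0_r. unfold Finv. apply (inv_eq Ft Ft_inc). lra.
Qed.

Lemma sw_inc s t : 0 <= s -> s < t -> sw s < sw t.
Proof. intros. apply rpow_lt; auto. pose proof mm_gt1; lra. Qed.

Lemma V_inc s t : 0 <= s -> s < t -> Vf s < Vf t.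
Proof.
  intros hs hst. destruct (V_spec s) as [a1 b1]. destruct (V_spec t) as [a2 b2].
  apply (Glt_inv Ft Ft_inc); auto. rewrite b1, b2. pose proof (Gt_inc (sw s) (sw t) (sw_nn s) (sw_inc s t hs hst)). lra.
Qed.

Lemma sw_cont s : continuous sw s.
Proof. apply rpow_cont. pose proof mm_gt1; lra. Qed.

Lemma V_cont s : continuous Vf s.
Proof.
  unfold Vf. apply (continuous_comp (fun s => Ft a + Gt (sw s)) Finv).
  - apply (continuous_plus (fun _ => Ft a) (fun s => Gt (sw s))). apply continuous_const.
    apply (continuous_comp sw Gt). apply sw_cont. apply Gt_cont.
  - destruct (V_spec s) as [_ e]. fold (Vf s). rewrite <- e. apply continuity_pt_filterlim.
    apply (inv_cont Ft Ft_inc (fun x _ => Ft_cpt x) Ft_0r). apply V_pos.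
Qed.

Lemma gq_cont s : continuous gq s.
Proof.
  destruct (Rlt_dec 0 s) as [hs|hs].
  - apply (continuous_ext_loc _ (fun s => gt (2 * sw s) / s)).
    + exists (mkposreal s hs). intros y hy. rball hy. unfold gq. destruct (Rlt_dec 0 y); [|lra].
      rewrite gt_eq; auto. pose proof (sw_nn y); lra.
    + apply (continuous_mult (fun s => gt (2 * sw s)) (fun s => / s)).
      * apply (continuous_comp (fun s => 2 * sw s) gt). apply (continuous_scal_r 2 sw). apply sw_cont. apply gt_cont.
      * apply continuity_pt_filterlim. apply continuity_pt_inv. apply continuity_pt_id. lra.
  - destruct (Rlt_dec s 0) as [hs'|hs'].
    + apply (continuous_ext_loc _ (fun _ => 0)).
      * exists (mkposreal (-s) ltac:(lra)). intros y hy. rball hy. unfold gq. destruct (Rlt_dec 0 y); [lra|auto].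
      * apply continuous_const.
    + assert (s = 0) by lra. subst s. apply continuity_pt_filterlim. intros eps heps.
      pose proof L_nn. pose proof mm_gt1.
      destruct (rpow_small (mm - 1) ltac:(lra) (eps / (2 * L + 1))) as [d [hd Hs]].
      { apply Rdiv_lt_0_compat; lra. }
      exists d; split; auto. intros y [_ hy]. simpl in *. unfold R_dist in *.
      unfold gq. destruct (Rlt_dec 0 0); [lra|]. destruct (Rlt_dec 0 y) as [hy0|hy0].
      * rewrite Rminus_0_r in *. rewrite Rabs_right in hy by lra.
        specialize (hL (2 * sw y) 0 ltac:(pose proof (sw_nn y); lra) ltac:(lra)).
        rewrite hg0, !Rminus_0_r in hL. rewrite (Rabs_right (2 * sw y)) in hL by (pose proof (sw_nn y); lra).
        unfold Rdiv. rewrite Rabs_mult, Rabs_inv, (Rabs_right y) by lra.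
        assert (EW : sw y = y * rpow y (mm - 1)).
        { unfold sw. replace mm with (1 + (mm - 1)) at 1 by ring. rewrite rpow_plus, rpow_1; lra. }
        specialize (Hs y hy). pose proof (rpow_ge0 y (mm - 1)).
        apply (Rmult_lt_reg_r y); auto. rewrite Rmult_assoc, Rinv_l, Rmult_1_r by lra.
        apply Rle_lt_trans with (L * (2 * sw y)); auto. rewrite EW.
        assert (L * (2 * (y * rpow y (mm - 1))) <= (2 * L + 1) * rpow y (mm - 1) * y) by nra.
        assert ((2 * L + 1) * rpow y (mm - 1) < eps) as HH.
        { apply (Rmult_lt_reg_r (/ (2 * L + 1))). apply Rinv_0_lt_compat; lra.
          replace ((2 * L + 1) * rpow y (mm - 1) * / (2 * L + 1)) with (rpow y (mm - 1)) by (field; lra). exact Hs. }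
        nra.
      * rewrite Rminus_0_r, Rabs_R0. auto.
Qed.

Lemma fV_pos s : 0 < f (Vf s).
Proof. apply f_pos, V_pos. Qed.

Lemma fV_cont s : continuous (fun s => f (Vf s)) s.
Proof. apply (continuous_comp Vf f). apply V_cont. apply hfc, V_pos. Qed.

Lemma rhod_cont s : continuous rhod s.
Proof.
  unfold rhod. apply (continuous_mult (fun s => mm * (2 * gq s + kk * p * rpow s (p - 1))) (fun s => / f (Vf s))).
  - apply (continuous_scal_r mm (fun s => 2 * gq s + kk * p * rpow s (p - 1))).
    apply (continuous_plus (fun s => 2 * gq s) (fun s => kk * p * rpow s (p - 1))).
    + apply (continuous_scal_r 2 gq). apply gq_cont.
    + apply (continuous_scal_r (kk * p) (fun s => rpow s (p - 1))). apply rpow_cont; lra.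
  - apply continuity_pt_filterlim. apply continuity_pt_inv. apply continuity_pt_filterlim, fV_cont.
    apply Rgt_not_eq, fV_pos.
Qed.

Lemma gq_nn s : 0 <= gq s.
Proof. unfold gq. destruct (Rlt_dec 0 s); [|lra]. apply Rdiv_le_0_compat; auto. apply g_nn. pose proof (sw_nn s); lra. Qed.

Lemma rhod_nn s : 0 <= rhod s.
Proof.
  unfold rhod. apply Rdiv_le_0_compat; [|apply fV_pos]. pose proof mm_gt1. pose proof kk_pos. pose proof (gq_nn s).
  pose proof (rpow_ge0 s (p - 1)). apply Rmult_le_pos; [lra|]. apply Rplus_le_le_0_compat; [lra|].
  apply Rmult_le_pos; [|lra]. apply Rmult_le_pos; lra.
Qed.

Lemma rhod_lb s : mm * (kk * p * rpow s (p - 1)) / f (Vf s) <= rhod s.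
Proof.
  unfold rhod. unfold Rdiv. apply Rmult_le_compat_r. left; apply Rinv_0_lt_compat, fV_pos.
  pose proof mm_gt1. pose proof (gq_nn s). nra.
Qed.

Lemma rhod_pos s : 0 < s -> 0 < rhod s.
Proof.
  intros hs. eapply Rlt_le_trans; [|apply rhod_lb]. apply Rdiv_lt_0_compat; [|apply fV_pos].
  pose proof mm_gt1. pose proof kk_pos. pose proof (rpow_gt0 s (p - 1) hs).
  apply Rmult_lt_0_compat; [lra|]. apply Rmult_lt_0_compat; [|auto]. apply Rmult_lt_0_compat; lra.
Qed.

Lemma ex_RInt_rhod x y : ex_RInt rhod x y.
Proof. apply (@ex_RInt_continuous R_CompleteNormedModule). intros; apply rhod_cont. Qed.

Lemma rho_deriv s : is_derive rho s (rhod s).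
Proof.
  apply (is_derive_RInt rhod rho 0). { apply filter_forall. intros; apply (@RInt_correct R_CompleteNormedModule), ex_RInt_rhod. } apply rhod_cont.
Qed.

Lemma rho0 : rho 0 = 0.
Proof. apply RInt_pt0. Qed.

Lemma rho_inc x y : 0 <= x -> x < y -> rho x < rho y.
Proof.
  apply (strict_incr rho rhod). intros; apply rho_deriv. intros; apply rhod_nn. intros; apply rhod_pos; auto.
Qed.

Lemma rho_cpt x : continuity_pt rho x.
Proof. eapply deriv_cont_pt, rho_deriv. Qed.

Lemma V_deriv s : 0 < s -> is_derive Vf s (Vd s).
Proof.
  intros hs. set (w := sw s).
  assert (hw : 0 < w) by (apply rpow_gt0; auto).
  pose proof (is_derive_comp Gt sw s _ _ (Gt_deriv w hw) (rpow_derive s mm hs)) as D1.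
  pose proof (is_derive_plus (fun _ : R => Ft a) (fun s => Gt (sw s)) s zero _ (is_derive_const (Ft a) s) D1) as Du.
  destruct (V_spec s) as [_ e].
  assert (DF : is_derive Finv (Ft (Vf s)) (/ f (Vf s))).
  { unfold Finv. apply (inv_derive Ft Ft_inc (fun x _ => Ft_cpt x) Ft_0r). apply V_pos. apply fV_pos.
    rewrite <- ft_eq by (left; apply V_pos). apply Ft_deriv. }
  rewrite e in DF.
  pose proof (is_derive_comp Finv (fun s => plus (Ft a) (Gt (sw s))) s _ _ DF Du) as D.
  match type of D with is_derive _ _ ?v => replace (Vd s) with v end.
  { unfold Vf. eapply is_derive_ext. 2: exact D. intros t; reflexivity. }
  unfold scal, plus, zero; simpl; unfold mult; simpl.
  unfold Vd, rhod, gq. fold w. destruct (Rlt_dec 0 s); [|lra].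
  rewrite gt_eq by lra.
  assert (EW : w = s * rpow s (mm - 1)).
  { unfold w, sw. replace mm with (1 + (mm - 1)) at 1 by ring. rewrite rpow_plus, rpow_1; lra. }
  assert (EP : rpow w (p - 1) = rpow s (p - 1) * s).
  { unfold w, sw. rewrite rpow_mult. replace (mm * (p - 1)) with ((p - 1) + 1) by (unfold mm; field; lra).
    rewrite rpow_plus, rpow_1; lra. }
  rewrite EP. rewrite EW at 3. pose proof (fV_pos s). field. split; lra.
Qed.

Definition eta := 1 - INR n / cconst p n.
Lemma eta_pos : 0 < eta.
Proof.
  unfold eta. pose proof cconst_gt. pose proof INRn_ge1.
  assert (INR n / cconst p n < 1). { apply (Rmult_lt_reg_r (cconst p n)); [lra|]. unfold Rdiv. rewrite Rmult_assoc, Rinv_l; lra. }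
  lra.
Qed.

Lemma V_unb M : exists s, 0 <= s /\ M < Vf s.
Proof.
  set (M' := Rmax M 0). assert (M <= M') by apply Rmax_l. assert (0 <= M') by apply Rmax_r.
  destruct (Gt_unb (Ft (M' + 1))) as [X [hX hGX]].
  pose proof mm_gt1.
  exists (rpow X (/ mm)). split. apply rpow_ge0.
  assert (E : sw (rpow X (/ mm)) = X).
  { unfold sw. rewrite rpow_mult. replace (/ mm * mm) with 1 by (field; lra). apply rpow_1; auto. }
  destruct (V_spec (rpow X (/ mm))) as [h1 h2]. rewrite E in h2.
  assert (M' + 1 <= Vf (rpow X (/ mm))).
  { apply (Gle_inv Ft Ft_inc); [lra|auto|]. rewrite h2. pose proof (Ft_nn a ltac:(lra)). lra. }
  lra.
Qed.

Lemma V_s_pos s : a < Vf s -> 0 < s.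
Proof. intros h. destruct (Rlt_le_dec 0 s); auto. rewrite V_npos in h; lra. Qed.

Lemma H_le_2w s : 2 * a <= Vf s -> Hf (Vf s) <= 2 * sw s.
Proof.
  intros hV. set (V := Vf s) in *. set (w := sw s).
  destruct (V_spec s) as [h1 e]. fold V w in e.
  pose proof (Ft_bounds a V ltac:(lra) ltac:(lra)). pose proof (Ft_bounds 0 a ltac:(lra) ltac:(lra)).
  rewrite Ft0 in H0. pose proof (f_nn a ltac:(lra)).
  assert (Ft a <= Gt w) by nra.
  pose proof (Gt_super 2 w ltac:(lra) (sw_nn s)).
  destruct (Hf_spec V) as [h3 h4]; [lra|].
  apply (Gle_inv Gt Gt_inc); auto. pose proof (sw_nn s); fold w in H4; lra. lra.
Qed.

Section Hyps.
Hypothesis hK : forall v, a <= v -> 4 * v <= eta * Hf v.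

Lemma g_small s : 0 < s -> g (sw s) < eta * f (Vf s).
Proof.
  intros hs. set (V := Vf s). set (w := sw s).
  assert (hw : 0 < w) by (apply rpow_gt0; auto).
  destruct (V_spec s) as [h1 e]. fold V w in e.
  pose proof (V_ge_a s) as hVa. fold V in hVa. pose proof eta_pos as he.
  pose proof (Gt_wg w (Rlt_le _ _ hw)) as hwg.
  pose proof (Ft_bounds a V ltac:(lra) hVa) as hFV.
  pose proof (fV_pos s) as hfV. fold V in hfV.
  destruct (Rlt_le_dec (V - a) (eta * w)) as [hlt|hge].
  - apply (Rmult_lt_reg_r w); auto.
    apply Rle_lt_trans with ((V - a) * f V). nra.
    assert ((V - a) * f V < eta * w * f V) by (apply Rmult_lt_compat_r; auto). nra.
  - exfalso. destruct (Rle_lt_dec (2 * a) V) as [h2a|h2a].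
    + pose proof (H_le_2w s h2a) as hH. fold V w in hH. pose proof (hK V hVa). nra.
    + set (x := (V - a) / eta).
      assert (hxw : w <= x). { unfold x. apply (Rmult_le_reg_r eta); auto. unfold Rdiv. rewrite Rmult_assoc, Rinv_l; lra. }
      assert (hx : x * eta = V - a) by (unfold x; field; lra).
      assert (hxa : x <= a / eta). { apply (Rmult_le_reg_r eta); auto. unfold Rdiv. rewrite Rmult_assoc, Rinv_l; lra. }
      assert (hGx : Gt w <= Gt x) by (apply (Gle Gt Gt_inc); lra).
      set (t := (a / eta) / x).
      assert (ht1 : 1 <= t). { unfold t. apply (Rmult_le_reg_r x); [lra|]. unfold Rdiv at 1. rewrite Rmult_assoc, Rinv_l; lra. }
      pose proof (Gt_super t x ht1 ltac:(lra)) as hs2.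
      replace (t * x) with (a / eta) in hs2 by (unfold t; field; split; lra).
      pose proof (Ft_bounds a V ltac:(lra) hVa) as [hF1 _].
      assert (hVt : (V - a) * t = a). { unfold t. rewrite <- hx. field; split; lra. }
      assert (ha1 : a * f a <= Gt (a / eta)).
      { assert (E1 : t * ((V - a) * f a) = a * f a) by (rewrite <- Rmult_assoc, (Rmult_comm t), hVt; reflexivity).
        rewrite <- E1. apply Rle_trans with (t * Gt x); [|auto]. apply Rmult_le_compat_l; lra. }
      pose proof (Ft_bounds 0 a ltac:(lra) ltac:(lra)) as [_ hF0]. rewrite Ft0 in hF0.
      destruct (Hf_spec a) as [_ hHa]; [lra|].
      pose proof (hK a ltac:(lra)) as hKa.
      assert (a / eta < Hf a). { apply (Rmult_lt_reg_r eta); auto. unfold Rdiv. rewrite Rmult_assoc, Rinv_l by lra. nra. }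
      assert (Gt (a / eta) < Gt (Hf a)) by (apply Gt_inc; [apply Rdiv_le_0_compat; lra|auto]).
      lra.
Qed.

Lemma hH_cont v : 0 < v -> continuous (fun v => / Hf v) v.
Proof.
  intros hv. apply continuity_pt_filterlim. apply (continuity_pt_inv Hf). apply Hf_cont; auto.
  apply Rgt_not_eq, Hf_pos; auto.
Qed.

Lemma ex_RInt_hH x y : 0 < x -> 0 < y -> ex_RInt (fun v => / Hf v) x y.
Proof.
  intros hx hy. apply (@ex_RInt_continuous R_CompleteNormedModule). intros z hz. apply hH_cont.
  assert (0 < Rmin x y) by (apply Rmin_glb_lt; auto). lra.
Qed.

Lemma Vd_cont s : continuous Vd s.
Proof. unfold Vd. apply (continuous_mult rhod sw). apply rhod_cont. apply sw_cont. Qed.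

Lemma rho_mono x y : x <= y -> rho x <= rho y.
Proof.
  intros h. pose proof (mvt_lower rho rhod x y 0 h (fun c _ => rho_deriv c) (fun c _ => rhod_nn c)). lra.
Qed.

Hypothesis hB : exists l, forall b, 1 <= b -> RInt (fun v => / Hf v) 1 b <= l.

Lemma rho_bounded : exists B, forall s, rho s <= B.
Proof.
  destruct (V_unb (2 * a)) as [s1 [_ hs1]]. assert (hs1p : 0 < s1) by (apply V_s_pos; lra).
  destruct hB as [l hl]. assert (hl0 : 0 <= l). { specialize (hl 1 ltac:(lra)). rewrite RInt_pt0 in hl. auto. }
  exists (rho s1 + 2 * l). intros s. destruct (Rle_lt_dec s s1) as [hs|hs].
  { pose proof (rho_mono s s1 hs). lra. }
  assert (C : plus (RInt rhod 0 s1) (RInt rhod s1 s) = RInt rhod 0 s) by (apply RInt_Chasles; apply ex_RInt_rhod).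
  unfold plus in C; simpl in C.
  assert (hVs : Vf s1 < Vf s) by (apply V_inc; lra).
  assert (Exg : ex_RInt (fun σ => scal (Vd σ) (/ Hf (Vf σ))) s1 s).
  { apply (@ex_RInt_continuous R_CompleteNormedModule). intros z hz. rewrite Rmin_left, Rmax_right in hz by lra.
    apply (continuous_mult Vd (fun σ => / Hf (Vf σ))). apply Vd_cont.
    apply (continuous_comp Vf (fun v => / Hf v)). apply V_cont. apply hH_cont. apply V_pos. }
  assert (Le : RInt rhod s1 s <= RInt (fun σ => scal 2 (scal (Vd σ) (/ Hf (Vf σ)))) s1 s).
  { apply RInt_le. lra. apply ex_RInt_rhod. apply (@ex_RInt_scal R_NormedModule), Exg.
    intros σ hσ. change (rhod σ <= 2 * (Vd σ * / Hf (Vf σ))).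
    assert (h2 : 2 * a <= Vf σ). { assert (Vf s1 < Vf σ) by (apply V_inc; lra). lra. }
    pose proof (H_le_2w σ h2). pose proof (Hf_pos (Vf σ) (V_pos σ)). pose proof (rhod_nn σ).
    unfold Vd. apply (Rmult_le_reg_r (Hf (Vf σ))); auto.
    replace (2 * (rhod σ * sw σ * / Hf (Vf σ)) * Hf (Vf σ)) with (rhod σ * (2 * sw σ)) by (field; lra).
    apply Rmult_le_compat_l; auto. }
  rewrite (@RInt_scal R_CompleteNormedModule) in Le by exact Exg.
  rewrite (@RInt_comp R_CompleteNormedModule (fun v => / Hf v) Vf Vd) in Le.
  2:{ intros x hx. apply hH_cont, V_pos. }
  2:{ intros x hx. rewrite Rmin_left, Rmax_right in hx by lra. split. apply V_deriv; lra. apply Vd_cont. }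
  change (RInt rhod s1 s <= 2 * RInt (fun v => / Hf v) (Vf s1) (Vf s)) in Le.
  assert (C2 : plus (RInt (fun v => / Hf v) 1 (Vf s1)) (RInt (fun v => / Hf v) (Vf s1) (Vf s)) = RInt (fun v => / Hf v) 1 (Vf s)).
  { apply (@RInt_Chasles R_CompleteNormedModule); apply ex_RInt_hH; try lra; apply V_pos. }
  change (RInt (fun v => / Hf v) 1 (Vf s1) + RInt (fun v => / Hf v) (Vf s1) (Vf s) = RInt (fun v => / Hf v) 1 (Vf s)) in C2.
  assert (0 <= RInt (fun v => / Hf v) 1 (Vf s1)).
  { apply RInt_ge_0. lra. apply ex_RInt_hH; [lra| apply V_pos]. intros x hx. left; apply Rinv_0_lt_compat, Hf_pos; lra. }
  specialize (hl (Vf s) ltac:(lra)).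
  unfold rho. lra.
Qed.

Lemma rho_cont x : continuous rho x.
Proof. exact (@ex_derive_continuous R_AbsRing R_NormedModule _ x (ex_intro _ _ (rho_deriv x))). Qed.
Lemma rho_0r : forall eps, 0 < eps -> exists x, 0 < x /\ rho x < rho 0 + eps.
Proof. apply cont0_r, rho_cont. Qed.

Section WithR0.
Variable R0 : R.
Hypothesis HR0 : is_lub (fun y => exists s, 0 <= s /\ y = rho s) R0.

Lemma rho_lt_R0 s : 0 <= s -> rho s < R0.
Proof.
  intros hs. destruct HR0 as [h1 _]. assert (rho (s + 1) <= R0) by (apply h1; exists (s + 1); split; [lra|auto]).
  pose proof (rho_inc s (s + 1) hs ltac:(lra)). lra.
Qed.

Lemma R0_pos : 0 < R0.
Proof. pose proof (rho_lt_R0 0 ltac:(lra)). rewrite rho0 in H. auto. Qed.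

Lemma below_R0 r : r < R0 -> exists s, 0 <= s /\ r < rho s.
Proof.
  intros hr. destruct HR0 as [_ h2]. apply NNPP. intros hneg.
  assert (R0 <= r). { apply h2. intros y [s [hs ->]]. destruct (Rle_lt_dec (rho s) r); auto. exfalso; apply hneg; exists s; auto. }
  lra.
Qed.

Definition Sf r := inv_on_nonneg rho (Rmax 0 r).

Lemma S_spec r : 0 <= r < R0 -> 0 <= Sf r /\ rho (Sf r) = r.
Proof.
  intros hr. destruct (below_R0 r ltac:(lra)) as [s [hs hrs]].
  unfold Sf. rewrite Rmax_right by lra.
  destruct (inv_loc rho rho_inc (fun x _ => rho_cpt x) rho_0r 0 s r) as [h1 h2]; [lra|lra|rewrite rho0; lra|].
  split; [lra|auto].
Qed.

Lemma S_neg r : r <= 0 -> Sf r = 0.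
Proof. intros hr. unfold Sf. rewrite Rmax_left by lra. rewrite <- rho0 at 1. apply (inv_eq rho rho_inc). lra. Qed.

Lemma S_pos r : 0 < r < R0 -> 0 < Sf r.
Proof.
  intros hr. destruct (S_spec r) as [h1 h2]; [lra|]. destruct h1 as [h1|h1]; auto. rewrite <- h1, rho0 in h2. lra.
Qed.

Lemma S_inc r1 r2 : 0 <= r1 -> r1 < r2 -> r2 < R0 -> Sf r1 < Sf r2.
Proof.
  intros h1 h12 h2. destruct (S_spec r1) as [a1 b1]; [lra|]. destruct (S_spec r2) as [a2 b2]; [lra|].
  apply (Glt_inv rho rho_inc); auto. lra.
Qed.

Lemma S_le r1 r2 : 0 <= r1 -> r1 <= r2 -> r2 < R0 -> Sf r1 <= Sf r2.
Proof. intros. destruct (Req_dec r1 r2) as [->|]; [lra|]. left; apply S_inc; lra. Qed.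

Lemma S_cont r : r < R0 -> continuous Sf r.
Proof.
  intros hr. destruct (Rlt_dec 0 r) as [hr0|hr0].
  - apply (continuous_ext_loc _ (inv_on_nonneg rho)).
    + exists (mkposreal r hr0). intros y hy. rball hy. unfold Sf. rewrite Rmax_right; auto; lra.
    + destruct (S_spec r) as [_ e]; [lra|]. apply continuity_pt_filterlim. rewrite <- e at 1.
      apply (inv_cont rho rho_inc (fun x _ => rho_cpt x) rho_0r). apply S_pos; lra.
  - destruct (Rlt_dec r 0) as [hr1|hr1].
    + apply (continuous_ext_loc _ (fun _ => 0)).
      * exists (mkposreal (-r) ltac:(lra)). intros y hy. rball hy. rewrite S_neg; auto; lra.
      * apply continuous_const.
    + assert (r = 0) by lra. subst r. apply continuity_pt_filterlim. intros eps heps.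
      set (e := Rmin (eps / 2) 1).
      assert (he : 0 < e) by (apply Rmin_glb_lt; lra). assert (e <= eps / 2) by apply Rmin_l.
      pose proof (rho_inc 0 e ltac:(lra) he). rewrite rho0 in H0.
      exists (rho e). split; auto. intros y [_ hy]. simpl in *. unfold R_dist in *. rewrite Rminus_0_r in hy.
      rewrite (S_neg 0) by lra. rewrite Rminus_0_r.
      destruct (Rle_lt_dec y 0) as [hy0|hy0].
      * rewrite S_neg by auto. rewrite Rabs_R0; auto.
      * pose proof (rho_lt_R0 e ltac:(lra)). apply Rabs_def2 in hy.
        destruct (S_spec y) as [a1 b1]; [lra|]. rewrite Rabs_right by lra.
        assert (Sf y < e). { apply (Glt_inv rho rho_inc); lra. } lra.
Qed.

Lemma S_deriv r : 0 < r < R0 -> is_derive Sf r (/ rhod (Sf r)).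
Proof.
  intros hr. destruct (S_spec r) as [_ e]; [lra|]. pose proof (S_pos r hr) as hS.
  pose proof (inv_derive rho rho_inc (fun x _ => rho_cpt x) rho_0r (Sf r) (rhod (Sf r)) hS (rhod_pos _ hS) (rho_deriv _)) as D.
  rewrite e in D. apply (is_derive_ext_loc (inv_on_nonneg rho)); auto.
  exists (mkposreal r (proj1 hr)). intros y hy. rball hy. unfold Sf. rewrite Rmax_right; auto; lra.
Qed.

Definition vsol r := Vf (Sf r).
Definition zf r := rpow (Sf r) p.

Lemma v_deriv r : 0 < r < R0 -> is_derive vsol r (sw (Sf r)).
Proof.
  intros hr. pose proof (S_pos r hr) as hS.
  pose proof (is_derive_comp Vf Sf r _ _ (V_deriv _ hS) (S_deriv r hr)) as D.
  replace (sw (Sf r)) with (scal (/ rhod (Sf r)) (Vd (Sf r))); [exact D|].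
  unfold scal; simpl; unfold mult; simpl. unfold Vd. pose proof (rhod_pos _ hS). field. lra.
Qed.

Lemma z_deriv r : 0 < r < R0 -> is_derive zf r (p * rpow (Sf r) (p - 1) * / rhod (Sf r)).
Proof.
  intros hr. pose proof (S_pos r hr) as hS.
  pose proof (is_derive_comp (fun t => rpow t p) Sf r _ _ (rpow_derive _ p hS) (S_deriv r hr)) as D.
  match type of D with is_derive _ _ ?v => replace (p * rpow (Sf r) (p - 1) * / rhod (Sf r)) with v end; [exact D|].
  unfold scal; simpl; unfold mult; simpl. ring.
Qed.

Lemma z_eq t : 0 < t < R0 -> rpow (Derive vsol t) (p - 1) = zf t.
Proof.
  intros ht. rewrite (is_derive_unique _ _ _ (v_deriv t ht)). unfold sw, zf. rewrite rpow_mult.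
  f_equal. unfold mm. field. lra.
Qed.

Lemma zd_bound c : 0 <= c < R0 -> p * rpow (Sf c) (p - 1) * / rhod (Sf c) <= f (vsol c) / cconst p n.
Proof.
  intros hc. pose proof cconst_gt. pose proof INRn_ge1. pose proof (fV_pos (Sf c)) as hf. fold (vsol c) in hf.
  destruct (Req_dec c 0) as [->|hc0].
  - rewrite S_neg by lra. rewrite rpow_npos by lra. rewrite Rmult_0_r, Rmult_0_l. apply Rdiv_le_0_compat; lra.
  - assert (hS : 0 < Sf c) by (apply S_pos; lra).
    pose proof (rhod_lb (Sf c)) as hlb. fold (vsol c) in hlb. pose proof (rhod_pos _ hS).
    pose proof (rpow_gt0 (Sf c) (p - 1) hS). pose proof kk_pos. pose proof mm_gt1.
    rewrite <- kk_mm. apply (Rmult_le_reg_r (rhod (Sf c))); auto.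
    replace (p * rpow (Sf c) (p - 1) * / rhod (Sf c) * rhod (Sf c)) with (p * rpow (Sf c) (p - 1)) by (field; lra).
    apply Rle_trans with (f (vsol c) / (mm * kk) * (mm * (kk * p * rpow (Sf c) (p - 1)) / f (vsol c))).
    + right. field. repeat split; lra.
    + apply Rmult_le_compat_l; auto. apply Rdiv_le_0_compat; [lra|]. apply Rmult_lt_0_compat; lra.
Qed.

Lemma vsol_le r1 r2 : 0 <= r1 -> r1 <= r2 -> r2 < R0 -> vsol r1 <= vsol r2.
Proof.
  intros. unfold vsol. destruct (Req_dec r1 r2) as [->|]; [lra|]. left. apply V_inc.
  apply S_spec; lra. apply S_inc; lra.
Qed.

Lemma zf_bound r : 0 < r < R0 -> zf r <= r * (f (vsol r) / cconst p n).
Proof.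
  intros hr. destruct (MVT_gen zf 0 r (fun c => p * rpow (Sf c) (p - 1) * / rhod (Sf c))) as [c [hc e]].
  - intros x hx. rewrite Rmin_left, Rmax_right in hx by lra. apply z_deriv; lra.
  - intros x hx. rewrite Rmin_left, Rmax_right in hx by lra. apply continuity_pt_filterlim.
    apply (continuous_comp Sf (fun t => rpow t p)). apply S_cont; lra. apply rpow_cont; lra.
  - rewrite Rmin_left, Rmax_right in hc by lra.
    unfold zf in e at 2. rewrite S_neg, (rpow_npos 0) in e by lra.
    pose proof (zd_bound c ltac:(lra)).
    assert (f (vsol c) <= f (vsol r)). { apply f_le. left; apply V_pos. apply vsol_le; lra. }
    pose proof cconst_gt. pose proof INRn_ge1.
    assert (f (vsol c) / cconst p n <= f (vsol r) / cconst p n). { unfold Rdiv. apply Rmult_le_compat_r; [left; apply Rinv_0_lt_compat; lra|auto]. }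
    nra.
Qed.

Lemma vsol_cpt r : r < R0 -> continuity_pt vsol r.
Proof.
  intros hr. apply continuity_pt_filterlim. apply (continuous_comp Sf Vf). apply S_cont; auto. apply V_cont.
Qed.

Lemma vsol0 : vsol 0 = a.
Proof. unfold vsol. rewrite S_neg by lra. apply V_npos; lra. Qed.

Lemma vsol_mvt h : 0 < h < R0 -> 0 <= vsol h - vsol 0 <= h * sw (Sf h).
Proof.
  intros hh. rewrite vsol0. split. { pose proof (V_ge_a (Sf h)). unfold vsol. lra. }
  destruct (MVT_gen vsol 0 h (fun c => sw (Sf c))) as [c [hc e]].
  - intros x hx. rewrite Rmin_left, Rmax_right in hx by lra. apply v_deriv; lra.
  - intros x hx. rewrite Rmin_left, Rmax_right in hx by lra. apply vsol_cpt; lra.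
  - rewrite Rmin_left, Rmax_right in hc by lra. rewrite vsol0 in e. rewrite e.
    assert (sw (Sf c) <= sw (Sf h)). { unfold sw. apply rpow_le. pose proof mm_gt1; lra. apply S_spec; lra. apply S_le; lra. }
    nra.
Qed.

Lemma vsol_d0 : filterlim (fun h => (vsol h - vsol 0) / h) (at_right 0) (locally 0).
Proof.
  intros P [eps HP].
  assert (C : continuous (fun h => sw (Sf h)) 0). { apply (continuous_comp Sf sw). apply S_cont, R0_pos. apply sw_cont. }
  apply continuity_pt_filterlim in C. destruct (C eps (cond_pos eps)) as [d [hd Hd]].
  set (d' := Rmin d R0). assert (hd' : 0 < d') by (apply Rmin_glb_lt; [auto|apply R0_pos]).
  exists (mkposreal d' hd'). intros h hball hpos. apply HP. assert (hb : Rabs (h - 0) < d') by (apply ball_R; exact hball).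
  rewrite Rminus_0_r in hb.
  rewrite Rabs_right in hb by lra. simpl in hb.
  assert (d' <= d) by apply Rmin_l. assert (d' <= R0) by apply Rmin_r.
  pose proof (vsol_mvt h ltac:(lra)) as [m1 m2].
  specialize (Hd h). simpl in Hd. unfold R_dist in Hd.
  rewrite (S_neg 0) in Hd by lra. unfold sw in Hd at 2. rewrite (rpow_npos 0) in Hd by lra.
  assert (Rabs (sw (Sf h) - 0) < eps). { apply Hd. split. unfold D_x, no_cond; split; auto; lra. rewrite Rminus_0_r, Rabs_right; lra. }
  rewrite Rminus_0_r, Rabs_right in H1 by (apply Rle_ge, sw_nn).
  apply ball_R. rewrite Rminus_0_r. rewrite Rabs_right.
  - apply Rle_lt_trans with (sw (Sf h)); auto. apply (Rmult_le_reg_r h); auto. unfold Rdiv. rewrite Rmult_assoc, Rinv_l; lra.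
  - apply Rle_ge, Rdiv_le_0_compat; lra.
Qed.

Lemma vsol_blow : filterlim vsol (at_left R0) (Rbar_locally p_infty).
Proof.
  intros P [M HP]. destruct (V_unb M) as [s [hs hMs]].
  pose proof (rho_lt_R0 s hs). pose proof (rho_inc 0 1 ltac:(lra) ltac:(lra)). rewrite rho0 in H0.
  pose proof (rho_mono 0 s hs). rewrite rho0 in H1.
  exists (mkposreal (R0 - rho s) ltac:(lra)). intros x hx hxR. apply HP. rball hx.
  destruct (S_spec x) as [a1 b1]; [lra|].
  assert (s < Sf x) by (apply (Glt_inv rho rho_inc); lra).
  unfold vsol. pose proof (V_inc s (Sf x) hs H2). lra.
Qed.

Lemma construct : 0 < R0 /\ vsol 0 = a /\
  filterlim (fun h => (vsol h - vsol 0) / h) (at_right 0) (locally 0) /\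
  (forall r s, 0 <= r -> r < s -> s < R0 -> vsol r < vsol s) /\
  (forall r, 0 < r < R0 ->
     ex_derive vsol r /\
     ex_derive (fun t => rpow (Derive vsol t) (p - 1)) r /\
     Derive (fun t => rpow (Derive vsol t) (p - 1)) r
       + (INR n - 1) / r * rpow (Derive vsol r) (p - 1)
       < f (vsol r) - g (Derive vsol r)) /\
  filterlim vsol (at_left R0) (Rbar_locally p_infty).
Proof.
  split; [apply R0_pos|]. split; [apply vsol0|]. split; [apply vsol_d0|]. split.
  { intros r s hr hrs hs. unfold vsol. apply V_inc. apply S_spec; lra. apply S_inc; lra. }
  split; [|apply vsol_blow].
  intros r hr.
  assert (Dz : is_derive (fun t => rpow (Derive vsol t) (p - 1)) r (p * rpow (Sf r) (p - 1) * / rhod (Sf r))).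
  { apply (is_derive_ext_loc zf). 2: apply z_deriv; auto.
    exists (mkposreal (Rmin r (R0 - r)) ltac:(apply Rmin_glb_lt; lra)). intros t ht. rball ht.
    assert (Rmin r (R0 - r) <= r) by apply Rmin_l. assert (Rmin r (R0 - r) <= R0 - r) by apply Rmin_r.
    symmetry. apply z_eq. lra. }
  split. { eexists; apply v_deriv; auto. }
  split. { eexists; exact Dz. }
  assert (E1 : Derive (fun t => rpow (Derive vsol t) (p - 1)) r = p * rpow (Sf r) (p - 1) * / rhod (Sf r)) by (apply is_derive_unique; exact Dz).
  rewrite E1. rewrite z_eq by auto.
  assert (E2 : Derive vsol r = sw (Sf r)) by (apply is_derive_unique; apply v_deriv; auto).
  rewrite E2.
  pose proof (zd_bound r ltac:(lra)). pose proof (zf_bound r hr).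
  pose proof (S_pos r hr) as hS. pose proof (g_small (Sf r) hS) as hg. fold (vsol r) in hg.
  pose proof INRn_ge1. pose proof cconst_gt. pose proof (fV_pos (Sf r)) as hf. fold (vsol r) in hf.
  assert ((INR n - 1) / r * zf r <= (INR n - 1) * (f (vsol r) / cconst p n)).
  { apply (Rmult_le_reg_l r); [lra|]. replace (r * ((INR n - 1) / r * zf r)) with ((INR n - 1) * zf r) by (field; lra).
    replace (r * ((INR n - 1) * (f (vsol r) / cconst p n))) with ((INR n - 1) * (r * (f (vsol r) / cconst p n))) by ring.
    apply Rmult_le_compat_l; lra. }
  assert (E : INR n * (f (vsol r) / cconst p n) = (1 - eta) * f (vsol r)) by (unfold eta; field; lra).
  nra.
Qed.
End WithR0.

End Hyps.
End Constr.

Lemma hKfun_eq s : 0 <= s -> / inv_on_nonneg (Gamma p n g) (Fprim f s) = / Hf s.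
Proof.
  intros hs. unfold Hf. rewrite Fprim_eq by auto. f_equal. apply inv_ext. intros; apply Gamma_eq; auto.
Qed.

Section KO.
Variable l : R.
Hypothesis hl : is_RInt_gen (fun s => / inv_on_nonneg (Gamma p n g) (Fprim f s)) (at_point 1) (Rbar_locally p_infty) l.

Lemma KO_lim eps : 0 < eps -> exists B, 1 <= B /\ forall b, B < b -> Rabs (RInt (fun v => / Hf v) 1 b - l) < eps.
Proof.
  intros heps. destruct (hl (ball l eps)) as [Q R hQ hR HQR]. { exists (mkposreal eps heps); auto. }
  destruct hR as [M hM]. exists (Rmax M 1). split; [apply Rmax_r|]. intros b hb.
  pose proof (Rmax_l M 1). pose proof (Rmax_r M 1).
  destruct (HQR 1 b hQ (hM b ltac:(lra))) as [y [hy1 hy2]]. simpl in hy1.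
  apply (@is_RInt_unique R_CompleteNormedModule) in hy1.
  assert (RInt (fun s => / inv_on_nonneg (Gamma p n g) (Fprim f s)) 1 b = RInt (fun v => / Hf v) 1 b).
  { apply RInt_ext. intros x hx. rewrite Rmin_left, Rmax_right in hx by lra. apply hKfun_eq; lra. }
  rewrite <- H1, hy1. apply ball_R in hy2. exact hy2.
Qed.

Lemma KO_bound : forall b, 1 <= b -> RInt (fun v => / Hf v) 1 b <= l.
Proof.
  intros b hb. apply Rnot_lt_le. intros hlt.
  set (eps := RInt (fun v => / Hf v) 1 b - l).
  destruct (KO_lim eps ltac:(unfold eps; lra)) as [B [hB1 hB]].
  set (b' := Rmax B b + 1). pose proof (Rmax_l B b). pose proof (Rmax_r B b).
  specialize (hB b' ltac:(unfold b'; lra)).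
  assert (C : plus (RInt (fun v => / Hf v) 1 b) (RInt (fun v => / Hf v) b b') = RInt (fun v => / Hf v) 1 b').
  { apply (@RInt_Chasles R_CompleteNormedModule); apply ex_RInt_hH; unfold b'; lra. }
  change (RInt (fun v => / Hf v) 1 b + RInt (fun v => / Hf v) b b' = RInt (fun v => / Hf v) 1 b') in C.
  assert (0 <= RInt (fun v => / Hf v) b b').
  { apply RInt_ge_0. unfold b'; lra. apply ex_RInt_hH; unfold b'; lra. intros x hx. left; apply Rinv_0_lt_compat, Hf_pos; lra. }
  apply Rabs_def2 in hB. unfold eps in hB. lra.
Qed.

Lemma KO_growth : exists A, 1 <= A /\ forall v, A <= v -> 4 * v <= eta * Hf v.
Proof.
  pose proof eta_pos. destruct (KO_lim (eta / 32) ltac:(lra)) as [B [hB1 hB]].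
  exists (2 * B + 2). split; [lra|]. intros v hv.
  pose proof (hB v ltac:(lra)) as h1. pose proof (hB (v / 2) ltac:(lra)) as h2.
  assert (C : plus (RInt (fun v => / Hf v) 1 (v / 2)) (RInt (fun v => / Hf v) (v / 2) v) = RInt (fun v => / Hf v) 1 v).
  { apply (@RInt_Chasles R_CompleteNormedModule); apply ex_RInt_hH; lra. }
  change (RInt (fun v => / Hf v) 1 (v / 2) + RInt (fun v => / Hf v) (v / 2) v = RInt (fun v => / Hf v) 1 v) in C.
  assert (Lo : RInt (fun _ => / Hf v) (v / 2) v <= RInt (fun v => / Hf v) (v / 2) v).
  { apply RInt_le. lra. apply ex_RInt_const. apply ex_RInt_hH; lra.
    intros x hx. apply Rinv_le_contravar. apply Hf_pos; lra. apply Hf_le; lra. }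
  rewrite RInt_const in Lo. change (scal (v - v / 2) (/ Hf v)) with ((v - v / 2) * / Hf v) in Lo.
  apply Rabs_def2 in h1. apply Rabs_def2 in h2.
  pose proof (Hf_pos v ltac:(lra)).
  assert ((v - v / 2) * / Hf v < eta / 16) by lra.
  apply (Rmult_lt_compat_r (Hf v)) in H1; auto. rewrite Rmult_assoc, Rinv_l in H1 by lra. lra.
Qed.
End KO.

Lemma main_result : (exists l, is_RInt_gen (fun s => / inv_on_nonneg (Gamma p n g) (Fprim f s)) (at_point 1) (Rbar_locally p_infty) l) ->
  exists V0 : R, forall v0 : R, V0 < v0 ->
    exists (R0 : R) (v : R -> R),
      0 < R0 /\ v 0 = v0 /\
      filterlim (fun h => (v h - v 0) / h) (at_right 0) (locally 0) /\
      (forall r s, 0 <= r -> r < s -> s < R0 -> v r < v s) /\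
      (forall r, 0 < r < R0 ->
         ex_derive v r /\
         ex_derive (fun t => rpow (Derive v t) (p - 1)) r /\
         Derive (fun t => rpow (Derive v t) (p - 1)) r
           + (INR n - 1) / r * rpow (Derive v r) (p - 1)
           < f (v r) - g (Derive v r)) /\
      filterlim v (at_left R0) (Rbar_locally p_infty).
Proof.
  intros [l hl]. destruct (KO_growth l hl) as [A [hA1 hA]].
  exists A. intros v0 hv0.
  assert (ha : 1 <= v0) by lra.
  assert (hK : forall v, v0 <= v -> 4 * v <= eta * Hf v) by (intros; apply hA; lra).
  assert (hB : exists l, forall b, 1 <= b -> RInt (fun v => / Hf v) 1 b <= l) by (exists l; apply KO_bound; auto).
  destruct (rho_bounded v0 ha hB) as [Bd hBd].
  destruct (completeness (fun y => exists s, 0 <= s /\ y = rho v0 s)) as [R0 HR0].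
  { exists Bd. intros y [s [_ ->]]. apply hBd. }
  { exists (rho v0 0). exists 0; split; [lra|auto]. }
  exists R0, (vsol v0).
  pose proof (construct v0 ha hK R0 HR0) as C.
  exact C.
Qed.
End Main.


Theorem lemma5p1 (p : R) (n : nat) (f g : R -> R)
  (hp : 1 < p) (hn : (1 <= n)%nat)
  (* f in C([0,oo)) *)
  (hfc : forall x, 0 < x -> continuous f x)
  (hfc0 : filterlim f (at_right 0) (locally (f 0)))
  (hfinc : forall x y, 0 <= x -> x < y -> f x < f y)
  (hf0 : f 0 = 0)
  (* g in C^{0,1}([0,oo)) *)
  (hgLip : exists L, forall x y, 0 <= x -> 0 <= y -> Rabs (g x - g y) <= L * Rabs (x - y))
  (hginc : forall x y, 0 <= x -> x < y -> g x < g y)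
  (hg0 : g 0 = 0)
  (* int_1^oo ds / Gamma^{-1}(F(s)) < oo *)
  (hKO : ex_RInt_gen (fun s => / inv_on_nonneg (Gamma p n g) (Fprim f s))
           (at_point 1) (Rbar_locally p_infty)) :
  exists V0 : R, forall v0 : R, V0 < v0 ->
    exists (R0 : R) (v : R -> R),
      0 < R0 /\
      v 0 = v0 /\
      (* v'(0) = 0 (right derivative) *)
      filterlim (fun h => (v h - v 0) / h) (at_right 0) (locally 0) /\
      (* v increasing on [0,R0) *)
      (forall r s, 0 <= r -> r < s -> s < R0 -> v r < v s) /\
      (* strict supersolution on (0,R0) *)
      (forall r, 0 < r < R0 ->
         ex_derive v r /\
         ex_derive (fun t => rpow (Derive v t) (p - 1)) r /\
         Derive (fun t => rpow (Derive v t) (p - 1)) r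
           + (INR n - 1) / r * rpow (Derive v r) (p - 1)
           < f (v r) - g (Derive v r)) /\
      (* blow-up at R0 *)
      filterlim v (at_left R0) (Rbar_locally p_infty).
Proof.
  destruct hgLip as [L hL].
  apply (main_result p n f g L); auto.
Qed.
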